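(* Let the multiplicity sequence $\Lambda=\{\lambda_n,\mu_n\}_{n=1}^{\infty}$ be an interpolating variety for $A^0_{|z|}$. Then for every $\epsilon>0$ there is a constant $m_\epsilon>0$, independent of $n$, such that \[ \inf_{k\ne n}|\lambda_n-\lambda_k|\ge m_\epsilon\exp\Big\{-\frac{\epsilon|\lambda_n|}{\mu_n}\Big\}\qquad\text{for all } n\in\mathbb{N}. \]
   Context: A multiplicity sequence $\Lambda=\{\lambda_n,\mu_n\}_{n=1}^\infty$ consists of distinct nonzero complex numbers $\lambda_n$ with $|\lambda_n|\to\infty$, $|\lambda_n|\le|\lambda_{n+1}|$, and positive integers $\mu_n$. $A^0_{|z|}$ is the space of entire functions $F$ with: for every $\epsilon>0$ there is $M_\epsilon$ with $|F(z)|\le M_\epsilon e^{\epsilon|z|}$ on $\mathbb{C}$. $\Lambda$ is an interpolating variety for $A^0_{|z|}$ if for every doubly indexed complex sequence $(a_{n,k})_{n\in\mathbb{N},0\le k\le\mu_n-1}$ with $\sup_n\sum_{k}|a_{n,k}|e^{-\epsilon|\lambda_n|}<\infty$ for every $\epsilon>0$ there is $f\in A^0_{|z|}$ with $f^{(k)}(\lambda_n)/k!=a_{n,k}$ for all $n,k$. *)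

(* Defs.v *)
From Stdlib Require Import Reals Lra.
From Coquelicot Require Import Coquelicot.
Open Scope R_scope.

(* Sequences are indexed from 0 instead of 1 (lambda 0 = lambda_1 of the paper). *)

Definition entire (F : C -> C) : Prop :=
  forall z : C, @ex_derive C_AbsRing C_NormedModule F z.

Definition cderivs (F : C -> C) (D : nat -> C -> C) : Prop :=
  D 0%nat = F /\
  forall (k : nat) (z : C), @is_derive C_AbsRing C_NormedModule (D k) z (D (S k) z).

Definition A0 (F : C -> C) : Prop :=
  entire F /\
  forall eps : R, 0 < eps -> exists M : R, forall z : C, Cmod (F z) <= M * exp (eps * Cmod z).

Definition multiplicity_sequence (lam : nat -> C) (mu : nat -> nat) : Prop :=
  (forall n m, n <> m -> lam n <> lam m) /\
  (forall n, lam n <> 0%C) /\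
  (forall M : R, exists N : nat, forall n, (N <= n)%nat -> M < Cmod (lam n)) /\
  (forall n, Cmod (lam n) <= Cmod (lam (S n))) /\
  (forall n, (1 <= mu n)%nat).

Definition admissible_data (lam : nat -> C) (mu : nat -> nat) (a : nat -> nat -> C) : Prop :=
  forall eps : R, 0 < eps -> exists B : R, forall n : nat,
    sum_f_R0 (fun k => Cmod (a n k)) (pred (mu n)) * exp (- eps * Cmod (lam n)) <= B.

Definition interpolating_variety (lam : nat -> C) (mu : nat -> nat) : Prop :=
  forall a : nat -> nat -> C, admissible_data lam mu a ->
    exists f : C -> C, A0 f /\
      exists D : nat -> C -> C, cderivs f D /\
        forall n k : nat, (k < mu n)%nat ->
          Cdiv (D k (lam n)) (RtoC (INR (Factorial.fact k))) = a n k.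

(* Main.v *)
Require Import Defs.
From Stdlib Require Import Reals Lra Lia Factorial ClassicalEpsilon Classical.
From Coquelicot Require Import Coquelicot.
Open Scope R_scope.

Ltac ceq := apply injective_projections; simpl; ring.


Lemma Cmod_RtoC_mult (u : R) (h : C) : Cmod (RtoC u * h)%C = Rabs u * Cmod h.
Proof. rewrite Cmod_mult, Cmod_R; reflexivity. Qed.

Lemma cderiv_eps (G : C -> C) (z0 l : C) :
  @is_derive C_AbsRing C_NormedModule G z0 l ->
  forall eps : R, 0 < eps -> exists d : R, 0 < d /\
    forall y : C, Cmod (y - z0)%C < d ->
      Cmod (G y - G z0 - (y - z0) * l)%C <= eps * Cmod (y - z0)%C.
Proof.
  intros [_ H] eps Heps.
  specialize (H z0 (fun P HP => HP) (mkposreal eps Heps)).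
  destruct H as [d Hd].
  exists d; split; [apply cond_pos|].
  intros y Hy. apply (Hd y). exact Hy.
Qed.

Lemma bridge (G : C -> C) (l a h c : C) (s : R) :
  @is_derive C_AbsRing C_NormedModule G (a + RtoC s * h)%C l ->
  is_derive (fun t : R => Re (c * G (a + RtoC t * h))%C) s (Re (c * (h * l))%C).
Proof.
  intros HG. apply is_derive_Reals. intros eps Heps.
  set (K := Cmod c * Cmod h + 1).
  assert (HK : 0 < K) by (unfold K; pose proof (Cmod_ge_0 c); pose proof (Cmod_ge_0 h); nra).
  destruct (cderiv_eps _ _ _ HG (eps / (2 * K))) as [d [Hd Hd']].
  { apply Rdiv_lt_0_compat; lra. }
  exists (mkposreal (d / (Cmod h + 1)) ltac:(apply Rdiv_lt_0_compat; [lra| pose proof (Cmod_ge_0 h); lra])).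
  intros u Hu0 Hu. simpl in Hu.
  set (z0 := (a + RtoC s * h)%C).
  set (y := (a + RtoC (s + u) * h)%C).
  assert (Hyz : (y - z0)%C = (RtoC u * h)%C) by (unfold y, z0; ceq).
  assert (Hm : Cmod (y - z0) < d).
  { rewrite Hyz, Cmod_RtoC_mult.
    pose proof (Cmod_ge_0 h).
    apply Rlt_le_trans with (Rabs u * (Cmod h + 1)); [|].
    - assert (0 < Rabs u) by (apply Rabs_pos_lt; auto). nra.
    - apply Rmult_le_reg_r with (/ (Cmod h + 1)). apply Rinv_0_lt_compat; lra.
      rewrite Rmult_assoc, Rinv_r by lra. rewrite Rmult_1_r. unfold Rdiv in Hu. lra. }
  specialize (Hd' y Hm). fold z0 in Hd'. rewrite Hyz in Hd'.
  fold z0 y.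
  assert (E : (Re (c * G y) - Re (c * G z0)) / u - Re (c * (h * l))
             = Re (c * (G y - G z0 - RtoC u * h * l)) / u).
  { unfold Re, Cmult, Cminus, Cplus, Copp, RtoC; simpl. field. auto. }
  rewrite E. unfold Rdiv. rewrite Rabs_mult, Rabs_inv.
  apply Rle_lt_trans with (Cmod (c * (G y - G z0 - RtoC u * h * l)) * / Rabs u).
  { apply Rmult_le_compat_r. left; apply Rinv_0_lt_compat, Rabs_pos_lt; auto. apply re_le_Cmod. }
  rewrite Cmod_mult.
  rewrite Cmod_RtoC_mult in Hd'.
  assert (0 < Rabs u) by (apply Rabs_pos_lt; auto).
  apply Rle_lt_trans with (Cmod c * (eps / (2 * K) * (Rabs u * Cmod h)) * / Rabs u).
  { apply Rmult_le_compat_r. left; apply Rinv_0_lt_compat; auto.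
    apply Rmult_le_compat_l. apply Cmod_ge_0. exact Hd'. }
  replace (Cmod c * (eps / (2 * K) * (Rabs u * Cmod h)) * / Rabs u)
    with (eps * (Cmod c * Cmod h) / (2 * K)) by (field; lra).
  apply Rmult_lt_reg_r with (2 * K). lra.
  unfold Rdiv. rewrite Rmult_assoc, Rinv_l, Rmult_1_r by lra.
  unfold K. pose proof (Cmod_ge_0 c); pose proof (Cmod_ge_0 h). assert (0 <= Cmod c * Cmod h) by (apply Rmult_le_pos; auto). set (P := Cmod c * Cmod h) in *. nra.
Qed.
Definition cd (f : C -> C) (z l : C) := @is_derive C_AbsRing C_NormedModule f z l.

Lemma tr1 f z l : @is_derive C_AbsRing (AbsRing_NormedModule C_AbsRing) f z l -> cd f z l.
Proof. intros [_ Hd]. split. apply (@is_linear_scal_l C_AbsRing C_NormedModule). intros x Hx eps. exact (Hd x Hx eps). Qed.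
Lemma tr2 f z l : cd f z l -> @is_derive C_AbsRing (AbsRing_NormedModule C_AbsRing) f z l.
Proof. intros [_ Hd]. split. apply (@is_linear_scal_l C_AbsRing). intros x Hx eps. exact (Hd x Hx eps). Qed.

Lemma cd_ext f g z l : (forall t, f t = g t) -> cd f z l -> cd g z l.
Proof. apply is_derive_ext. Qed.
Lemma cd_const (k z : C) : cd (fun _ => k) z 0%C.
Proof. apply (@is_derive_const C_AbsRing C_NormedModule). Qed.
Lemma cd_id (z : C) : cd (fun t => t) z 1%C.
Proof. apply tr1. exact (@is_derive_id C_AbsRing z). Qed.
Lemma cd_plus f g z df dg : cd f z df -> cd g z dg -> cd (fun t => f t + g t)%C z (df + dg)%C.
Proof. intros; apply (@is_derive_plus C_AbsRing C_NormedModule); auto. Qed.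
Lemma cd_minus f g z df dg : cd f z df -> cd g z dg -> cd (fun t => f t - g t)%C z (df - dg)%C.
Proof. intros; apply (@is_derive_minus C_AbsRing C_NormedModule); auto. Qed.
Lemma cd_mult f g z df dg : cd f z df -> cd g z dg -> cd (fun t => f t * g t)%C z (df * g z + f z * dg)%C.
Proof. intros H1 H2; apply tr1. exact (@is_derive_mult C_AbsRing f g z df dg (tr2 _ _ _ H1) (tr2 _ _ _ H2) Cmult_comm). Qed.

Lemma cd_eq f z l l' : l = l' -> cd f z l -> cd f z l'.
Proof. intros ->; auto. Qed.

Fixpoint mono (a z : C) (n : nat) : C :=
  match n with
  | O => 1%C
  | S m => (mono a z m * (z - a) / RtoC (INR (S m)))%C
  end.

Lemma INR_S_neq0 n : RtoC (INR (S n)) <> 0%C.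
Proof. intro H. apply (f_equal fst) in H. change (INR (S n) = 0) in H. pose proof (pos_INR n). rewrite S_INR in H. lra. Qed.

Lemma mono_rel a z n : (mono a z n * (z - a) = RtoC (INR (S n)) * mono a z (S n))%C.
Proof. simpl. field. apply INR_S_neq0. Qed.

Lemma cd_mono a z n : cd (fun t => mono a t (S n)) z (mono a z n).
Proof.
  induction n.
  - simpl. eapply cd_eq; [|apply (cd_mult (fun t => 1 * (t - a))%C (fun _ => / RtoC 1)%C)].
    2: { eapply cd_eq; [|apply cd_mult; [apply cd_const| apply cd_minus; [apply cd_id|apply cd_const]]]. reflexivity. }
    2: apply cd_const.
    simpl. apply injective_projections; simpl; field.
  - change (cd (fun t => mono a t (S n) * (t - a) * / RtoC (INR (S (S n))))%C z (mono a z (S n))).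
    eapply cd_eq; [|apply cd_mult; [apply cd_mult; [exact IHn| apply cd_minus; [apply cd_id|apply cd_const]] | apply cd_const]].
    rewrite mono_rel.
    assert (HS := INR_S_neq0 (S n)).
    replace (RtoC (INR (S (S n)))) with (RtoC (INR (S n)) + 1)%C in * by (rewrite (S_INR (S n)); ceq).
    field. auto.
Qed.

Fixpoint T (D : nat -> C -> C) (a : C) (N : nat) (z : C) : C :=
  match N with
  | O => 0%C
  | S M => (T D a M z + D M a * mono a z M)%C
  end.

Definition shiftD (D : nat -> C -> C) : nat -> C -> C := fun k => D (S k).

Lemma cd_T D a N z : cd (fun t => T D a (S N) t) z (T (shiftD D) a N z).
Proof.
  induction N.
  - simpl. eapply cd_eq; [|apply cd_plus; [apply cd_const| apply cd_mult; [apply cd_const|apply cd_const]]].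
    ceq.
  - change (cd (fun t => T D a (S N) t + D (S N) a * mono a t (S N))%C z (T (shiftD D) a N z + shiftD D N a * mono a z N)%C).
    eapply cd_eq; [|apply cd_plus; [exact IHN| apply cd_mult; [apply cd_const|apply cd_mono]]].
    unfold shiftD. ceq.
Qed.

Lemma mono_a0 a n : mono a a (S n) = 0%C.
Proof. induction n; simpl in *. - ceq. - rewrite IHn. ceq. Qed.

Lemma T_at_a D a N : T D a (S N) a = D O a.
Proof.
  induction N.
  - simpl. ceq.
  - change (T D a (S N) a + D (S N) a * mono a a (S N) = D 0%nat a)%C.
    rewrite IHN, mono_a0. ceq.
Qed.

Lemma cderivs_shift F D : cderivs F D -> cderivs (D 1%nat) (shiftD D).
Proof. intros [_ H]. split; [reflexivity|]. intros k z. apply H. Qed.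

Lemma cderivs_cd F D : cderivs F D -> forall k z, cd (D k) z (D (S k) z).
Proof. intros [_ H]. exact H. Qed.


Lemma is_derive_cont (f : R -> R) x l : is_derive f x l -> continuity_pt f x.
Proof.
  intro H. apply continuity_pt_filterlim. apply (ex_derive_continuous f x). exists l; exact H.
Qed.

Lemma Re_RtoC_sq (E : C) : Re (Cconj E * E)%C = Cmod E ^ 2.
Proof. rewrite Cmult_comm, <- Cmod2_conj. simpl. reflexivity. Qed.

Lemma taylor N : forall F D, cderivs F D -> forall a h Sb,
  (forall t, 0 <= t <= 1 -> Cmod (D N (a + RtoC t * h)%C) <= Sb) ->
  Cmod (F (a + h) - T D a N (a + h))%C <= Sb * Cmod h ^ N / INR (fact N).
Proof.
  induction N as [|N IH]; intros F D HD a h Sb HS.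
  - destruct HD as [HD0 _]. subst F. simpl.
    specialize (HS 1 ltac:(lra)).
    replace (a + RtoC 1 * h)%C with (a + h)%C in HS by ceq.
    replace (D 0%nat (a + h)%C - 0)%C with (D 0%nat (a + h)%C) by ceq. lra.
  - assert (HS0 : 0 <= Sb) by (eapply Rle_trans; [apply Cmod_ge_0| apply (HS 0); lra]).
    set (G := fun z => (F z - T D a (S N) z)%C).
    assert (HG : forall z, cd G z (D 1%nat z - T (shiftD D) a N z)%C).
    { intro z. unfold G. apply cd_minus; [|apply cd_T].
      destruct HD as [HD0 HD1]. subst F. apply HD1. }
    set (E := G (a + h)%C). change (Cmod E <= Sb * Cmod h ^ S N / INR (fact (S N))).
    set (c := Cconj E).
    set (r := fun s : R => Re (c * G (a + RtoC s * h))%C).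
    set (X := Sb * Cmod h ^ S N / INR (fact (S N))).
    set (phi := fun s : R => Cmod E * X * s ^ (S N)).
    set (dr := fun s : R => Re (c * (h * (D 1%nat (a + RtoC s * h) - T (shiftD D) a N (a + RtoC s * h))))%C).
    set (dphi := fun s : R => Cmod E * X * (INR (S N) * 1 * s ^ Init.Nat.pred (S N))).
    assert (Hr : forall s, is_derive r s (dr s)).
    { intro s. apply bridge. apply HG. }
    assert (Hphi : forall s, is_derive phi s (dphi s)).
    { intro s. apply is_derive_scal. apply is_derive_pow. apply (@is_derive_id R_AbsRing). }
    assert (Hpsi : forall s, is_derive (fun s => r s - phi s) s (dr s - dphi s)).
    { intro s. apply (@is_derive_minus R_AbsRing R_NormedModule); auto. }
    destruct (MVT_gen (fun s => r s - phi s) 0 1 (fun s => dr s - dphi s)) as [x [Hx Heq]].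
    { intros; apply Hpsi. }
    { intros; eapply is_derive_cont; apply Hpsi. }
    rewrite Rmin_left, Rmax_right in Hx by lra.
    assert (Hd : dr x <= dphi x).
    { unfold dr, dphi.
      eapply Rle_trans; [apply Rle_abs|]. eapply Rle_trans; [apply re_le_Cmod|].
      rewrite !Cmod_mult. unfold c. rewrite Cmod_conj.
      assert (HIH := IH (D 1%nat) (shiftD D) (cderivs_shift F D HD) a (RtoC x * h)%C Sb).
      assert (HIH' : Cmod (D 1%nat (a + RtoC x * h) - T (shiftD D) a N (a + RtoC x * h))%C
                     <= Sb * Cmod (RtoC x * h)%C ^ N / INR (fact N)).
      { apply HIH. intros t Ht. unfold shiftD.
        replace (a + RtoC t * (RtoC x * h))%C with (a + RtoC (t * x) * h)%C by ceq.
        apply HS. split; [apply Rmult_le_pos; lra| ]. nra. }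
      rewrite Cmod_RtoC_mult, Rabs_pos_eq in HIH' by lra.
      simpl pred. unfold X.
      rewrite fact_simpl, mult_INR.
      assert (HF : 0 < INR (fact N)) by (apply lt_0_INR, lt_O_fact).
      assert (HSN : 0 < INR (S N)) by (apply lt_0_INR; lia).
      replace (Cmod E * (Sb * Cmod h ^ S N / (INR (S N) * INR (fact N))) * (INR (S N) * 1 * x ^ N))
        with (Cmod E * Cmod h * (Sb * (x * Cmod h) ^ N / INR (fact N)))
        by (rewrite Rpow_mult_distr; change (Cmod h ^ S N) with (Cmod h * Cmod h ^ N); field; split; apply Rgt_not_eq; lra).
      rewrite <- Rmult_assoc.
      apply Rmult_le_compat_l. apply Rmult_le_pos; apply Cmod_ge_0.
      exact HIH'. }
    assert (H1 : r 1 - phi 1 <= r 0 - phi 0) by nra.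
    unfold r, phi in H1.
    replace (a + RtoC 1 * h)%C with (a + h)%C in H1 by ceq.
    replace (a + RtoC 0 * h)%C with a in H1 by ceq.
    unfold G at 2 in H1. rewrite T_at_a in H1.
    destruct HD as [HD0 _].
    rewrite HD0 in H1. assert (Z0 : Cminus (F a) (F a) = RtoC 0) by ceq. rewrite Z0 in H1.
    fold E in H1. unfold c in H1. rewrite Re_RtoC_sq in H1.
    rewrite Cmult_0_r in H1. simpl (Re 0) in H1.
    rewrite pow1, pow_i in H1 by lia.
    assert (HX : 0 <= X).
    { unfold X. apply Rmult_le_pos. apply Rmult_le_pos; auto. apply pow_le, Cmod_ge_0.
      left; apply Rinv_0_lt_compat, lt_0_INR, lt_O_fact. }
    pose proof (Cmod_ge_0 E).
    fold X. nra.
Qed.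


Definition small3 (e : C -> C) := exists K tau, 0 < tau /\
  forall h, Cmod h < tau -> Cmod (e h) <= K * Cmod h ^ 3.
Definition bdd (g : C -> C) := exists B tau, 0 < tau /\
  forall h, Cmod h < tau -> Cmod (g h) <= B.

Lemma small3_ext e e' : (forall h, e h = e' h) -> small3 e -> small3 e'.
Proof. intros E [K [t [Ht H]]]. exists K, t. split; auto. intros h Hh. rewrite <- E. auto. Qed.

Lemma small3_plus e e' : small3 e -> small3 e' -> small3 (fun h => e h + e' h)%C.
Proof.
  intros [K [t [Ht H]]] [K' [t' [Ht' H']]]. exists (K + K'), (Rmin t t'). split.
  apply Rmin_pos; auto. intros h Hh.
  assert (Hh1 : Cmod h < t) by (eapply Rlt_le_trans; [exact Hh| apply Rmin_l]).
  assert (Hh2 : Cmod h < t') by (eapply Rlt_le_trans; [exact Hh| apply Rmin_r]).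
  eapply Rle_trans; [apply Cmod_triangle|]. specialize (H h Hh1). specialize (H' h Hh2). lra.
Qed.

Lemma small3_opp e : small3 e -> small3 (fun h => - e h)%C.
Proof. intros [K [t [Ht H]]]. exists K, t. split; auto. intros h Hh. rewrite Cmod_opp. auto. Qed.

Lemma small3_mult e g : small3 e -> bdd g -> small3 (fun h => e h * g h)%C.
Proof.
  intros [K [t [Ht H]]] [B [t' [Ht' H']]]. exists (Rabs K * Rabs B), (Rmin t t'). split.
  apply Rmin_pos; auto. intros h Hh.
  assert (Hh1 : Cmod h < t) by (eapply Rlt_le_trans; [exact Hh| apply Rmin_l]).
  assert (Hh2 : Cmod h < t') by (eapply Rlt_le_trans; [exact Hh| apply Rmin_r]).
  rewrite Cmod_mult. specialize (H h Hh1). specialize (H' h Hh2).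
  assert (0 <= Cmod h ^ 3) by (apply pow_le, Cmod_ge_0).
  assert (Cmod (g h) <= Rabs B) by (eapply Rle_trans; [exact H'| apply Rle_abs]).
  assert (Cmod (e h) <= Rabs K * Cmod h ^ 3).
  { eapply Rle_trans; [exact H|]. apply Rmult_le_compat_r; auto. apply Rle_abs. }
  pose proof (Cmod_ge_0 (e h)). pose proof (Cmod_ge_0 (g h)).
  replace (Rabs K * Rabs B * Cmod h ^ 3) with ((Rabs K * Cmod h ^ 3) * Rabs B) by ring.
  apply Rmult_le_compat; auto.
Qed.

Lemma small3_cube (c : C) : small3 (fun h => c * (h * h * h))%C.
Proof.
  exists (Cmod c), 1. split; [lra|]. intros h _. rewrite !Cmod_mult. simpl. lra.
Qed.

Lemma small3_quart (c : C) : small3 (fun h => c * (h * h * h * h))%C.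
Proof.
  exists (Cmod c), 1. split; [lra|]. intros h Hh. rewrite !Cmod_mult. simpl.
  pose proof (Cmod_ge_0 h). pose proof (Cmod_ge_0 c).
  assert (0 <= Cmod c * (Cmod h * Cmod h * Cmod h)) by (repeat apply Rmult_le_pos; auto).
  replace (Cmod c * (Cmod h * Cmod h * Cmod h * Cmod h)) with (Cmod c * (Cmod h * Cmod h * Cmod h) * Cmod h) by ring.
  replace (Cmod c * (Cmod h * (Cmod h * (Cmod h * 1)))) with (Cmod c * (Cmod h * Cmod h * Cmod h) * 1) by ring.
  apply Rmult_le_compat_l; lra.
Qed.

Lemma bdd_const (c : C) : bdd (fun _ => c).
Proof. exists (Cmod c), 1. split; [lra|]. intros; lra. Qed.

Lemma bdd_plus g g' : bdd g -> bdd g' -> bdd (fun h => g h + g' h)%C.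
Proof.
  intros [K [t [Ht H]]] [K' [t' [Ht' H']]]. exists (K + K'), (Rmin t t'). split.
  apply Rmin_pos; auto. intros h Hh.
  assert (Hh1 : Cmod h < t) by (eapply Rlt_le_trans; [exact Hh| apply Rmin_l]).
  assert (Hh2 : Cmod h < t') by (eapply Rlt_le_trans; [exact Hh| apply Rmin_r]).
  eapply Rle_trans; [apply Cmod_triangle|]. specialize (H h Hh1). specialize (H' h Hh2). lra.
Qed.

Lemma bdd_mult g g' : bdd g -> bdd g' -> bdd (fun h => g h * g' h)%C.
Proof.
  intros [K [t [Ht H]]] [K' [t' [Ht' H']]]. exists (Rabs K * Rabs K'), (Rmin t t'). split.
  apply Rmin_pos; auto. intros h Hh.
  assert (Hh1 : Cmod h < t) by (eapply Rlt_le_trans; [exact Hh| apply Rmin_l]).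
  assert (Hh2 : Cmod h < t') by (eapply Rlt_le_trans; [exact Hh| apply Rmin_r]).
  rewrite Cmod_mult. specialize (H h Hh1). specialize (H' h Hh2).
  apply Rmult_le_compat; try apply Cmod_ge_0; eapply Rle_trans; eauto; apply Rle_abs.
Qed.

Lemma bdd_id : bdd (fun h => h).
Proof. exists 1, 1. split; [lra|]. intros; lra. Qed.

Definition LE2 (F : C -> C) (p c0 c1 c2 : C) :=
  small3 (fun h => F (p + h) - (c0 + c1 * h + c2 * (h * h)))%C.

Lemma LE2_c0 F p c0 c1 c2 : LE2 F p c0 c1 c2 -> c0 = F p.
Proof.
  intros [K [t [Ht H]]]. specialize (H 0%C). rewrite Cmod_0 in H.
  specialize (H Ht). rewrite pow_i, Rmult_0_r in H by lia.
  assert (Cmod (F (p + 0) - (c0 + c1 * 0 + c2 * (0 * 0)))%C = 0) by (pose proof (Cmod_ge_0 (F (p + 0) - (c0 + c1 * 0 + c2 * (0 * 0)))%C); lra).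
  apply Cmod_eq_0 in H0. replace (p + 0)%C with p in H0 by ceq.
  apply (f_equal (fun x => F p - x)%C) in H0.
  replace (F p - (F p - (c0 + c1 * 0 + c2 * (0 * 0))))%C with c0 in H0 by ring.
  rewrite H0. ring.
Qed.

Lemma LE2_bdd F p c0 c1 c2 : LE2 F p c0 c1 c2 -> bdd (fun h => F (p + h))%C.
Proof.
  intros [K [t [Ht H]]].
  exists (Cmod c0 + Cmod c1 + Cmod c2 + Rabs K), (Rmin t 1). split. apply Rmin_pos; lra.
  intros h Hh.
  assert (Hh1 : Cmod h < t) by (eapply Rlt_le_trans; [exact Hh| apply Rmin_l]).
  assert (Hh2 : Cmod h < 1) by (eapply Rlt_le_trans; [exact Hh| apply Rmin_r]).
  specialize (H h Hh1).
  replace (F (p + h)%C) with ((F (p + h) - (c0 + c1 * h + c2 * (h * h))) + c0 + c1 * h + c2 * (h * h))%C by ring.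
  pose proof (Cmod_ge_0 h).
  assert (Cmod h ^ 3 <= 1) by (simpl; assert (Cmod h * Cmod h <= 1) by nra; nra).
  assert (K * Cmod h ^ 3 <= Rabs K).
  { destruct (Rle_dec 0 K). rewrite Rabs_pos_eq by auto. pose proof (pow_le (Cmod h) 3 H0). nra.
    pose proof (pow_le (Cmod h) 3 H0). pose proof (Rabs_pos K). nra. }
  set (e0 := (F (p + h) - (c0 + c1 * h + c2 * (h * h)))%C) in *.
  pose proof (Cmod_triangle (e0 + c0 + c1 * h)%C (c2 * (h * h))%C).
  pose proof (Cmod_triangle (e0 + c0)%C (c1 * h)%C).
  pose proof (Cmod_triangle e0 c0).
  rewrite !Cmod_mult in *.
  assert (Cmod c1 * Cmod h <= Cmod c1) by (pose proof (Cmod_ge_0 c1); nra).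
  assert (Cmod c2 * (Cmod h * Cmod h) <= Cmod c2) by (pose proof (Cmod_ge_0 c2); assert (Cmod h * Cmod h <= 1) by nra; nra).
  lra.
Qed.

Lemma LE2_ext F G p c0 c1 c2 r : 0 < r -> (forall h, Cmod h < r -> F (p + h)%C = G (p + h)%C) ->
  LE2 F p c0 c1 c2 -> LE2 G p c0 c1 c2.
Proof.
  intros Hr E [K [t [Ht H]]]. exists K, (Rmin t r). split. apply Rmin_pos; auto.
  intros h Hh.
  assert (Hh1 : Cmod h < t) by (eapply Rlt_le_trans; [exact Hh| apply Rmin_l]).
  assert (Hh2 : Cmod h < r) by (eapply Rlt_le_trans; [exact Hh| apply Rmin_r]).
  rewrite <- E by auto. auto.
Qed.

Lemma bdd_poly (c0 c1 c2 : C) : bdd (fun h => c0 + c1 * h + c2 * (h * h))%C.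
Proof.
  apply bdd_plus; [apply bdd_plus|]; [apply bdd_const| apply bdd_mult; [apply bdd_const|apply bdd_id]|].
  apply bdd_mult; [apply bdd_const| apply bdd_mult; apply bdd_id].
Qed.

Lemma LE2_mult F G p f0 f1 f2 g0 g1 g2 : LE2 F p f0 f1 f2 -> LE2 G p g0 g1 g2 ->
  LE2 (fun z => F z * G z)%C p (f0 * g0) (f0 * g1 + f1 * g0) (f0 * g2 + f1 * g1 + f2 * g0)%C.
Proof.
  intros HF HG. pose proof (LE2_bdd _ _ _ _ _ HG) as BG.
  unfold LE2 in *.
  apply small3_ext with (e := (fun h => (F (p + h) - (f0 + f1 * h + f2 * (h * h))) * G (p + h)
     + (G (p + h) - (g0 + g1 * h + g2 * (h * h))) * (f0 + f1 * h + f2 * (h * h))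
     + (f1 * g2 + f2 * g1) * (h * h * h) + (f2 * g2) * (h * h * h * h))%C).
  { intro h. ring. }
  apply small3_plus; [apply small3_plus; [apply small3_plus|]|].
  - apply (small3_mult _ _ HF BG).
  - apply small3_mult. exact HG. apply bdd_poly.
  - apply (small3_cube (f1 * g2 + f2 * g1)%C).
  - apply (small3_quart (f2 * g2)%C).
Qed.

Lemma small3_ext_loc e e' r : 0 < r -> (forall h, Cmod h < r -> e h = e' h) -> small3 e -> small3 e'.
Proof.
  intros Hr E [K [t [Ht H]]]. exists K, (Rmin t r). split. apply Rmin_pos; auto.
  intros h Hh.
  assert (Hh1 : Cmod h < t) by (eapply Rlt_le_trans; [exact Hh| apply Rmin_l]).
  assert (Hh2 : Cmod h < r) by (eapply Rlt_le_trans; [exact Hh| apply Rmin_r]).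
  rewrite <- E by auto. auto.
Qed.

Lemma LE2_away F p c0 c1 c2 : LE2 F p c0 c1 c2 -> c0 <> 0%C ->
  exists r, 0 < r /\ forall h, Cmod h < r -> Cmod c0 / 2 <= Cmod (F (p + h)%C).
Proof.
  intros [K [t [Ht H]]] Hc0.
  assert (H0 : 0 < Cmod c0) by (apply Cmod_gt_0; auto).
  set (L := Cmod c1 + Cmod c2 + Rabs K + 1).
  assert (HL : 0 < L) by (unfold L; pose proof (Cmod_ge_0 c1); pose proof (Cmod_ge_0 c2); pose proof (Rabs_pos K); lra).
  exists (Rmin (Rmin t 1) (Cmod c0 / (2 * L))). split.
  { repeat apply Rmin_pos; try lra. apply Rdiv_lt_0_compat; lra. }
  intros h Hh.
  assert (Hh1 : Cmod h < t) by (eapply Rlt_le_trans; [exact Hh| eapply Rle_trans; apply Rmin_l]).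
  assert (Hh2 : Cmod h < 1) by (eapply Rlt_le_trans; [exact Hh| eapply Rle_trans; [apply Rmin_l| apply Rmin_r]]).
  assert (Hh3 : Cmod h < Cmod c0 / (2 * L)) by (eapply Rlt_le_trans; [exact Hh| apply Rmin_r]).
  specialize (H h Hh1).
  set (e0 := (F (p + h) - (c0 + c1 * h + c2 * (h * h)))%C) in *.
  assert (E : c0 = (F (p + h) - e0 - c1 * h - c2 * (h * h))%C) by (unfold e0; ring).
  pose proof (Cmod_ge_0 h) as Hh0.
  assert (Cmod c0 <= Cmod (F (p + h)%C) + Cmod e0 + Cmod c1 * Cmod h + Cmod c2 * (Cmod h * Cmod h)).
  { rewrite E at 1.
    pose proof (Cmod_triangle (F (p + h) - e0 - c1 * h)%C (- (c2 * (h * h)))%C).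
    pose proof (Cmod_triangle (F (p + h) - e0)%C (- (c1 * h))%C).
    pose proof (Cmod_triangle (F (p + h))%C (- e0)%C).
    rewrite !Cmod_opp, !Cmod_mult in *. unfold Cminus in *. lra. }
  assert (Cmod e0 <= Rabs K * Cmod h).
  { eapply Rle_trans; [exact H|]. eapply Rle_trans; [apply Rmult_le_compat_r; [apply pow_le; lra| apply Rle_abs]|].
    apply Rmult_le_compat_l; [apply Rabs_pos|]. simpl. assert (Cmod h * Cmod h <= 1) by nra. nra. }
  assert (Cmod c2 * (Cmod h * Cmod h) <= Cmod c2 * Cmod h).
  { apply Rmult_le_compat_l. apply Cmod_ge_0. nra. }
  assert (L * Cmod h <= Cmod c0 / 2).
  { apply Rmult_lt_compat_l with (r := L) in Hh3; auto.
    replace (L * (Cmod c0 / (2 * L))) with (Cmod c0 / 2) in Hh3 by (field; lra). lra. }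
  unfold L in *. pose proof (Cmod_ge_0 c1). pose proof (Cmod_ge_0 c2). nra.
Qed.

Lemma LE2_div F P p f0 f1 f2 P0 P1 P2 : LE2 F p f0 f1 f2 -> LE2 P p P0 P1 P2 -> P0 <> 0%C ->
  LE2 (fun z => F z / P z)%C p (f0 / P0)
      ((f1 - P1 * (f0 / P0)) / P0)
      ((f2 - P1 * ((f1 - P1 * (f0 / P0)) / P0) - P2 * (f0 / P0)) / P0)%C.
Proof.
  intros HF HP HP0.
  destruct (LE2_away _ _ _ _ _ HP HP0) as [r [Hr Hr']].
  assert (H0 : 0 < Cmod P0) by (apply Cmod_gt_0; auto).
  set (w0 := (f0 / P0)%C). set (w1 := ((f1 - P1 * w0) / P0)%C). set (w2 := ((f2 - P1 * w1 - P2 * w0) / P0)%C).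
  unfold LE2 in *.
  apply small3_ext_loc with (r := r) (e := (fun h =>
     ((F (p + h) - (f0 + f1 * h + f2 * (h * h)))
      - (P (p + h) - (P0 + P1 * h + P2 * (h * h))) * (w0 + w1 * h + w2 * (h * h))
      + (- (P1 * w2 + P2 * w1)) * (h * h * h) + (- (P2 * w2)) * (h * h * h * h)) * / P (p + h))%C); auto.
  { intros h Hh. specialize (Hr' h Hh).
    assert (HPh : P (p + h)%C <> 0%C). { intro E. rewrite E, Cmod_0 in Hr'. lra. }
    unfold w2, w1, w0. field. auto. }
  apply small3_mult.
  - apply small3_plus; [apply small3_plus; [apply small3_plus|]|].
    + exact HF.
    + apply small3_opp. apply small3_mult. exact HP. apply bdd_poly.
    + apply small3_cube.
    + apply small3_quart.
  - exists (2 / Cmod P0), r. split; auto. intros h Hh. specialize (Hr' h Hh).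
    assert (HPh : P (p + h)%C <> 0%C). { intro E. rewrite E, Cmod_0 in Hr'. lra. }
    rewrite Cmod_inv by auto.
    assert (0 < Cmod (P (p + h)%C)) by lra.
    apply Rmult_le_reg_l with (Cmod (P (p + h)%C) * Cmod P0 / 2). 
    { apply Rmult_lt_0_compat; [apply Rmult_lt_0_compat|]; lra. }
    field_simplify; try lra.
Qed.


Lemma myCeq_dec (z w : C) : {z = w} + {z <> w}.
Proof.
  destruct z as [x y], w as [u v].
  destruct (Req_EM_T x u) as [->|H1]; [destruct (Req_EM_T y v) as [->|H2]|].
  - left; reflexivity.
  - right; intro E; inversion E; auto.
  - right; intro E; inversion E; auto.
Qed.

Lemma local_bound (G : C -> C) (p l : C) : cd G p l ->
  exists r, 0 < r /\ forall z, Cmod (z - p) < r -> Cmod (G z) <= Cmod (G p) + 1.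
Proof.
  intro H. destruct (cderiv_eps _ _ _ H 1 ltac:(lra)) as [d [Hd Hd']].
  set (L := Cmod l + 1). assert (HL : 0 < L) by (unfold L; pose proof (Cmod_ge_0 l); lra).
  exists (Rmin d (/ L)). split. apply Rmin_pos; auto. apply Rinv_0_lt_compat; auto.
  intros z Hz.
  assert (Hz1 : Cmod (z - p) < d) by (eapply Rlt_le_trans; [exact Hz| apply Rmin_l]).
  assert (Hz2 : Cmod (z - p) < / L) by (eapply Rlt_le_trans; [exact Hz| apply Rmin_r]).
  specialize (Hd' z Hz1).
  replace (G z) with (G p + (G z - G p - (z - p) * l) + (z - p) * l)%C by ring.
  pose proof (Cmod_triangle (G p + (G z - G p - (z - p) * l))%C ((z - p) * l)%C).
  pose proof (Cmod_triangle (G p) (G z - G p - (z - p) * l)%C).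
  rewrite Cmod_mult in *.
  assert (Cmod (z - p)%C * L < 1).
  { apply Rmult_lt_compat_r with (r := L) in Hz2; auto. rewrite Rinv_l in Hz2 by lra. lra. }
  unfold L in *. pose proof (Cmod_ge_0 (z - p)%C). lra.
Qed.

Lemma mono_closed a h n : mono a (a + h)%C n = (Cpow h n / RtoC (INR (fact n)))%C.
Proof.
  induction n.
  - simpl. assert (E1 : RtoC 1 <> 0%C) by (intro E; apply (f_equal fst) in E; simpl in E; lra). field; auto.
  - change (mono a (a + h)%C n * ((a + h) - a) / RtoC (INR (S n)) = Cpow h (S n) / RtoC (INR (fact (S n))))%C.
    rewrite IHn. rewrite fact_simpl, mult_INR.
    assert (HF : RtoC (INR (fact n)) <> 0%C).
    { intro E. apply (f_equal fst) in E. simpl in E. pose proof (lt_0_INR _ (lt_O_fact n)). lra. }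
    pose proof (INR_S_neq0 n).
    replace (RtoC (INR (S n) * INR (fact n))) with (RtoC (INR (S n)) * RtoC (INR (fact n)))%C by ceq.
    simpl Cpow. field. auto.
Qed.

Lemma taylor_loc F D p N : cderivs F D ->
  exists K r, 0 < r /\ forall h, Cmod h < r -> Cmod (F (p + h) - T D p N (p + h))%C <= K * Cmod h ^ N.
Proof.
  intro HD.
  destruct (local_bound (D N) p (D (S N) p) (cderivs_cd F D HD N p)) as [r [Hr Hr']].
  exists ((Cmod (D N p) + 1) / INR (fact N)), r. split; auto.
  intros h Hh. eapply Rle_trans. apply taylor; auto.
  - intros t Ht. apply Hr'. replace (p + RtoC t * h - p)%C with (RtoC t * h)%C by ring.
    rewrite Cmod_RtoC_mult. rewrite Rabs_pos_eq by lra.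
    pose proof (Cmod_ge_0 h). nra.
  - right. field. apply Rgt_not_eq, lt_0_INR, lt_O_fact.
Qed.

Lemma small3_of_taylor F D p : cderivs F D ->
  small3 (fun h => F (p + h) - T D p 3 (p + h))%C.
Proof. intro HD. exact (taylor_loc F D p 3 HD). Qed.

Lemma LE_tower F D p : cderivs F D -> exists c0 c1 c2, LE2 F p c0 c1 c2.
Proof.
  intro HD. pose proof (small3_of_taylor F D p HD) as H.
  exists (D 0%nat p), (D 1%nat p), (D 2%nat p / RtoC 2)%C.
  unfold LE2. eapply small3_ext; [|exact H]. intro h. cbv beta. unfold T.
  rewrite !mono_closed. simpl fact. simpl Cpow. change (INR 1) with 1. change (INR 2) with (1+1).
  replace (RtoC (1+1)) with (RtoC 2) by (apply f_equal; ring). field. Qed.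

Lemma LE_pow a n p : exists c0 c1 c2, LE2 (fun z => Cpow (z - a) n) p c0 c1 c2.
Proof.
  induction n as [|n [c0 [c1 [c2 IH]]]].
  - exists 1%C, 0%C, 0%C. unfold LE2. eapply small3_ext; [|apply (small3_cube 0%C)].
    intro h. cbv beta. unfold Cpow. ring.
  - assert (H1 : LE2 (fun z => z - a)%C p (p - a)%C 1%C 0%C).
    { unfold LE2. eapply small3_ext; [|apply (small3_cube 0%C)]. intro h. cbv beta. ring. }
    eexists _, _, _. exact (LE2_mult _ _ _ _ _ _ _ _ _ H1 IH).
Qed.

Lemma Cpow_neq0 (z : C) n : z <> 0%C -> Cpow z n <> 0%C.
Proof.
  intros Hz E. apply (f_equal Cmod) in E. rewrite Cmod_pow, Cmod_0 in E.
  apply Cmod_gt_0 in Hz. apply (pow_lt _ n) in Hz. lra.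
Qed.

Lemma Csub_eq0 (z w : C) : (z - w)%C = 0%C -> z = w.
Proof. intro E. replace z with (z - w + w)%C by ring. rewrite E. ring. Qed.

Definition wq (f : C -> C) (D : nat -> C -> C) (a : C) (mu : nat) (z : C) : C :=
  if myCeq_dec z a then (D mu a / RtoC (INR (fact mu)))%C else (f z / Cpow (z - a) mu)%C.

Lemma LE_w_away f D a mu p : cderivs f D -> p <> a -> exists c0 c1 c2, LE2 (wq f D a mu) p c0 c1 c2.
Proof.
  intros HD Hpa.
  destruct (LE_tower f D p HD) as [f0 [f1 [f2 Hf]]].
  destruct (LE_pow a mu p) as [P0 [P1 [P2 HP]]].
  assert (HP0 : P0 <> 0%C).
  { rewrite (LE2_c0 _ _ _ _ _ HP). apply Cpow_neq0. intro E. apply Hpa. apply Csub_eq0; auto. }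
  pose proof (LE2_div _ _ _ _ _ _ _ _ _ Hf HP HP0) as H.
  eexists _, _, _. apply LE2_ext with (r := Cmod (p - a)%C) (F := fun z => (f z / Cpow (z - a) mu)%C); [| |exact H].
  - apply Cmod_gt_0. intro E. apply Hpa. apply Csub_eq0; auto.
  - intros h Hh. unfold wq. destruct (myCeq_dec (p + h)%C a) as [E|E]; [|reflexivity].
    exfalso. rewrite <- E in Hh. replace (p - (p + h))%C with (- h)%C in Hh by ring. rewrite Cmod_opp in Hh. lra.
Qed.

Lemma T_zero (D : nat -> C -> C) (a : C) n : (forall j, (j < n)%nat -> D j a = RtoC 0) -> forall z, T D a n z = RtoC 0.
Proof.
  induction n; intros H z. reflexivity.
  simpl. rewrite IHn by (intros; apply H; lia). rewrite H by lia. ring.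
Qed.

Lemma fact_neq0 n : RtoC (INR (fact n)) <> 0%C.
Proof. intro E. apply (f_equal fst) in E. simpl in E. pose proof (lt_0_INR _ (lt_O_fact n)). lra. Qed.

Lemma LE_w_at f D a mu : cderivs f D -> (forall j, (j < mu)%nat -> D j a = 0%C) ->
  exists c0 c1 c2, LE2 (wq f D a mu) a c0 c1 c2.
Proof.
  intros HD Hz.
  destruct (taylor_loc f D a (S (S (S mu))) HD) as [K [r [Hr H]]].
  set (c0 := (D mu a / RtoC (INR (fact mu)))%C).
  set (c1 := (D (S mu) a / RtoC (INR (fact (S mu))))%C).
  set (c2 := (D (S (S mu)) a / RtoC (INR (fact (S (S mu)))))%C).
  exists c0, c1, c2. exists K, r. split; auto. intros h Hh.
  unfold wq. destruct (myCeq_dec (a + h)%C a) as [E|E].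
  - assert (h = 0%C). { apply (f_equal (fun x => x - a)%C) in E. rewrite <- (Cplus_0_r h). 
      replace (h + 0)%C with (a + h - a)%C by ring. rewrite E. ring. }
    subst h. fold c0. replace (c0 - (c0 + c1 * 0 + c2 * (0 * 0)))%C with (RtoC 0) by ring.
    rewrite Cmod_0, pow_i, Rmult_0_r by lia. lra.
  - assert (Hh0 : h <> 0%C). { intro E0. subst. apply E. ring. }
    specialize (H h Hh).
    assert (ET : T D a (S (S (S mu))) (a + h)%C = (Cpow h mu * (c0 + c1 * h + c2 * (h * h)))%C).
    { cbn [T]. rewrite (T_zero D a mu Hz). rewrite !mono_closed. unfold c0, c1, c2.
      pose proof (fact_neq0 mu). pose proof (fact_neq0 (S mu)). pose proof (fact_neq0 (S (S mu))).
      simpl Cpow. field. auto. }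
    rewrite ET in H.
    replace (a + h - a)%C with h by ring.
    assert (HP : Cpow h mu <> 0%C) by (apply Cpow_neq0; auto).
    replace (f (a + h)%C / Cpow h mu - (c0 + c1 * h + c2 * (h * h)))%C
      with ((f (a + h)%C - Cpow h mu * (c0 + c1 * h + c2 * (h * h))) / Cpow h mu)%C by (field; auto).
    rewrite Cmod_div by auto. rewrite Cmod_pow.
    assert (0 < Cmod h ^ mu) by (apply pow_lt, Cmod_gt_0; auto).
    apply Rmult_le_reg_r with (Cmod h ^ mu); auto.
    unfold Rdiv. rewrite Rmult_assoc, Rinv_l, Rmult_1_r by lra.
    replace (K * Cmod h ^ 3 * Cmod h ^ mu) with (K * Cmod h ^ (S (S (S mu)))); auto.
    replace (S (S (S mu))) with (3 + mu)%nat by lia. rewrite pow_add. ring.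
Qed.


Lemma Rabs_le_inv x b : Rabs x <= b -> -b <= x <= b.
Proof. unfold Rabs; destruct (Rcase_abs x); lra. Qed.

Definition inQ (a z : C) := Rabs (Re z - Re a) <= 1 /\ Rabs (Im z - Im a) <= 1.
Definition ccont (F : C -> R) (p : C) := forall eps, 0 < eps -> exists d, 0 < d /\
  forall z, Rabs (Re z - Re p) < d -> Rabs (Im z - Im p) < d -> Rabs (F z - F p) < eps.

Lemma floor_nat (M : nat) : forall t, 0 <= t -> t <= INR M -> exists k, (k <= M)%nat /\ INR k <= t < INR k + 1.
Proof.
  induction M; intros t H0 H1.
  - exists 0%nat. simpl in *. split; [lia|lra].
  - destruct (Rlt_dec t 1).
    + exists 0%nat. simpl. split; [lia|lra].
    + rewrite S_INR in H1. destruct (IHM (t - 1)) as [k [Hk1 Hk2]]; try lra.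
      exists (S k). rewrite S_INR. split; [lia|lra].
Qed.

Lemma finite_max2 (G : nat -> nat -> R) (M : nat) : exists B, forall k l, (k <= M)%nat -> (l <= M)%nat -> G k l <= B.
Proof.
  assert (H1 : forall k, exists B, forall l, (l <= M)%nat -> G k l <= B).
  { intro k. induction M as [|M IH].
    - exists (G k 0%nat). intros l Hl. replace l with 0%nat by lia. lra.
    - destruct IH as [B HB]. exists (Rmax B (G k (S M))). intros l Hl.
      destruct (Nat.eq_dec l (S M)) as [->|Hne]. apply Rmax_r.
      eapply Rle_trans; [apply HB; lia| apply Rmax_l]. }
  assert (H2 : forall n, exists B, forall k l, (k <= n)%nat -> (l <= M)%nat -> G k l <= B).
  { induction n.
    - destruct (H1 0%nat) as [B HB]. exists B. intros k l Hk Hl. replace k with 0%nat by lia. auto.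
    - destruct IHn as [B HB]. destruct (H1 (S n)) as [B' HB']. exists (Rmax B B').
      intros k l Hk Hl. destruct (Nat.eq_dec k (S n)) as [->|Hne].
      eapply Rle_trans; [apply HB'; lia| apply Rmax_r].
      eapply Rle_trans; [apply HB; lia| apply Rmax_l]. }
  apply H2.
Qed.

Lemma bounded_Q (F : C -> R) (a : C) : (forall p, inQ a p -> ccont F p) ->
  exists K, forall z, inQ a z -> F z <= K.
Proof.
  intro Hc.
  assert (Hd : forall u v : R, exists d : posreal, inQ a (u, v) ->
     forall z, Rabs (Re z - u) < 2 * d -> Rabs (Im z - v) < 2 * d -> Rabs (F z - F (u, v)) < 1).
  { intros u v. destruct (classic (inQ a (u, v))) as [Hin|Hout].
    - destruct (Hc _ Hin 1 ltac:(lra)) as [d [Hd Hd']].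
      exists (mkposreal (d / 2) ltac:(lra)). intros _ z H1 H2. simpl in H1, H2.
      apply Hd'; simpl; lra.
    - exists (mkposreal 1 ltac:(lra)). intro; contradiction. }
  set (delta := fun u v => proj1_sig (constructive_indefinite_description _ (Hd u v))).
  assert (Hdelta : forall u v, inQ a (u, v) ->
     forall z, Rabs (Re z - u) < 2 * delta u v -> Rabs (Im z - v) < 2 * delta u v -> Rabs (F z - F (u, v)) < 1).
  { intros u v. unfold delta. destruct (constructive_indefinite_description _ (Hd u v)) as [d Hd']. simpl. exact Hd'. }
  destruct (compactness_value_2d (Re a - 1) (Re a + 1) (Im a - 1) (Im a + 1) delta) as [d Hcv].
  destruct (archimed_cor1 d (cond_pos d)) as [N [HN HN0]].
  assert (HNp : 0 < INR N) by (apply lt_0_INR; auto).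
  set (g := fun k l : nat => (Re a - 1 + INR k / INR N, Im a - 1 + INR l / INR N) : C).
  destruct (finite_max2 (fun k l => F (g k l)) (2 * N)) as [Mg HMg].
  exists (Mg + 2). intros z Hz.
  destruct z as [x y]. destruct Hz as [Hx Hy]. simpl in Hx, Hy.
  apply Rabs_le_inv in Hx. apply Rabs_le_inv in Hy.
  specialize (Hcv x y ltac:(lra) ltac:(lra)).
  apply NNPP in Hcv. destruct Hcv as [u [v [[Hu1 Hu2] [[Hv1 Hv2] [Hxu [Hyv Hdd]]]]]].
  assert (HuQ : inQ a (u, v)). { split; simpl; apply Rabs_le; lra. }
  assert (Hinv : forall t, 0 <= t -> t <= 2 -> exists k, (k <= 2 * N)%nat /\ t - / INR N < INR k / INR N <= t).
  { intros t Ht1 Ht2. destruct (floor_nat (2 * N) (t * INR N)) as [k [Hk1 Hk2]].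
    - apply Rmult_le_pos; lra.
    - rewrite mult_INR. simpl (INR 2). nra.
    - exists k. split; auto. split.
      + apply Rmult_lt_reg_r with (INR N); auto. unfold Rdiv. rewrite Rmult_minus_distr_r, Rmult_assoc, Rinv_l, Rmult_1_r by lra. lra.
      + apply Rmult_le_reg_r with (INR N); auto. unfold Rdiv. rewrite Rmult_assoc, Rinv_l, Rmult_1_r by lra. lra. }
  destruct (Hinv (x - (Re a - 1))) as [k [Hk1 Hk2]]; try lra.
  destruct (Hinv (y - (Im a - 1))) as [l [Hl1 Hl2]]; try lra.
  specialize (HMg k l Hk1 Hl1). simpl in HMg.
  assert (H1 : Rabs (F (x, y) - F (u, v)) < 1).
  { apply Hdelta; auto; simpl; pose proof (cond_pos (delta u v)); lra. }
  assert (H2 : Rabs (F (g k l) - F (u, v)) < 1).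
  { apply Hdelta; auto; unfold g; simpl; apply Rabs_def1; pose proof (cond_pos (delta u v));
    apply Rabs_def2 in Hxu; apply Rabs_def2 in Hyv; lra. }
  apply Rabs_def2 in H1. apply Rabs_def2 in H2. lra.
Qed.

Lemma inQ_center a : inQ a a.
Proof. split; unfold Rminus; rewrite Rplus_opp_r, Rabs_R0; lra. Qed.

Lemma argmax_Q (F : C -> R) (a : C) : (forall p, inQ a p -> ccont F p) ->
  exists p, inQ a p /\ forall z, inQ a z -> F z <= F p.
Proof.
  intro Hc. destruct (bounded_Q F a Hc) as [K HK].
  set (E := fun r => exists z, inQ a z /\ r = F z).
  destruct (completeness E) as [M [HM1 HM2]].
  { exists K. intros r [z [Hz ->]]. auto. }
  { exists (F a). exists a. split; auto. apply inQ_center. }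
  apply NNPP. intro Hno.
  assert (Hlt : forall p, inQ a p -> F p < M).
  { intros p Hp. destruct (Rle_lt_or_eq_dec (F p) M) as [H|H]; auto.
    apply HM1. exists p; auto.
    exfalso. apply Hno. exists p. split; auto. intros z Hz. rewrite H. apply HM1. exists z; auto. }
  set (G := fun z => / (M - F z)).
  assert (HcG : forall p, inQ a p -> ccont G p).
  { intros p Hp eps Heps. specialize (Hlt p Hp). set (m := M - F p).
    assert (Hm : 0 < m) by (unfold m; lra).
    destruct (Hc p Hp (Rmin (m / 2) (eps * m * m / 2))) as [d [Hd Hd']].
    { apply Rmin_pos. lra. apply Rmult_lt_0_compat; [|lra]. repeat apply Rmult_lt_0_compat; lra. }
    exists d. split; auto. intros z Hz1 Hz2. specialize (Hd' z Hz1 Hz2).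
    assert (Hd1 : Rabs (F z - F p) < m / 2) by (eapply Rlt_le_trans; [exact Hd'| apply Rmin_l]).
    assert (Hd2 : Rabs (F z - F p) < eps * m * m / 2) by (eapply Rlt_le_trans; [exact Hd'| apply Rmin_r]).
    apply Rabs_def2 in Hd1.
    assert (Hmz : m / 2 < M - F z) by (unfold m in *; lra).
    unfold G. fold m.
    replace (/ (M - F z) - / m) with ((F z - F p) / ((M - F z) * m)) by (unfold m; field; lra).
    unfold Rdiv. rewrite Rabs_mult, Rabs_inv, (Rabs_pos_eq ((M - F z) * m)) by (apply Rmult_le_pos; lra).
    apply Rmult_lt_reg_r with ((M - F z) * m). apply Rmult_lt_0_compat; lra.
    rewrite Rmult_assoc, Rinv_l, Rmult_1_r by (apply Rgt_not_eq, Rmult_lt_0_compat; lra).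
    apply Rlt_le_trans with (eps * m * m / 2); auto.
    assert (eps * (m / 2) * m <= eps * (M - F z) * m).
    { apply Rmult_le_compat_r; [lra|]. apply Rmult_le_compat_l; lra. }
    lra. }
  destruct (bounded_Q G a HcG) as [K' HK'].
  assert (HK'0 : 0 < K').
  { eapply Rlt_le_trans; [|apply (HK' a (inQ_center a))]. unfold G.
    apply Rinv_0_lt_compat. pose proof (Hlt a (inQ_center a)). lra. }
  assert (Hnub : ~ is_upper_bound E (M - / (K' + 1))).
  { intro Hub. specialize (HM2 _ Hub). pose proof (Rinv_0_lt_compat (K' + 1) ltac:(lra)). lra. }
  apply Hnub. intros r [z [Hz ->]]. apply Rnot_lt_le. intro Hlt2.
  specialize (HK' z Hz). unfold G in HK'. specialize (Hlt z Hz).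
  assert (HK1 : K' + 1 < / (M - F z)).
  { replace (K' + 1) with (/ / (K' + 1)) by (field; lra).
    apply Rinv_lt_contravar. apply Rmult_lt_0_compat; [lra| apply Rinv_0_lt_compat; lra]. lra. }
  lra.
Qed.


Lemma Cmod_le_sum (x : C) : Cmod x <= Rabs (Re x) + Rabs (Im x).
Proof.
  unfold Cmod. rewrite <- (sqrt_square (Rabs (Re x) + Rabs (Im x))) by (pose proof (Rabs_pos (Re x)); pose proof (Rabs_pos (Im x)); lra).
  apply sqrt_le_1_alt. unfold Re, Im.
  rewrite <- (pow2_abs (fst x)), <- (pow2_abs (snd x)).
  pose proof (Rabs_pos (fst x)); pose proof (Rabs_pos (snd x)). nra.
Qed.

Lemma LE2_cont w p c0 c1 c2 : LE2 w p c0 c1 c2 ->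
  forall eps, 0 < eps -> exists d, 0 < d /\ forall h, Cmod h < d -> Cmod (w (p + h)%C - w p) < eps.
Proof.
  intros H eps Heps. pose proof (LE2_c0 _ _ _ _ _ H) as Hc0.
  destruct H as [K [t [Ht H]]].
  set (L := Cmod c1 + Cmod c2 + Rabs K + 1).
  assert (HL : 0 < L) by (unfold L; pose proof (Cmod_ge_0 c1); pose proof (Cmod_ge_0 c2); pose proof (Rabs_pos K); lra).
  exists (Rmin (Rmin t 1) (eps / L)). split.
  { repeat apply Rmin_pos; try lra. apply Rdiv_lt_0_compat; lra. }
  intros h Hh.
  assert (Hh1 : Cmod h < t) by (eapply Rlt_le_trans; [exact Hh| eapply Rle_trans; apply Rmin_l]).
  assert (Hh2 : Cmod h < 1) by (eapply Rlt_le_trans; [exact Hh| eapply Rle_trans; [apply Rmin_l| apply Rmin_r]]).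
  assert (Hh3 : Cmod h < eps / L) by (eapply Rlt_le_trans; [exact Hh| apply Rmin_r]).
  specialize (H h Hh1).
  set (e0 := (w (p + h) - (c0 + c1 * h + c2 * (h * h)))%C) in *.
  replace (w (p + h)%C - w p)%C with (e0 + c1 * h + c2 * (h * h))%C by (unfold e0; rewrite Hc0; ring).
  pose proof (Cmod_triangle (e0 + c1 * h)%C (c2 * (h * h))%C).
  pose proof (Cmod_triangle e0 (c1 * h)%C).
  rewrite !Cmod_mult in *.
  pose proof (Cmod_ge_0 h) as Hh0.
  assert (Cmod e0 <= Rabs K * Cmod h).
  { eapply Rle_trans; [exact H|]. eapply Rle_trans; [apply Rmult_le_compat_r; [apply pow_le; lra| apply Rle_abs]|].
    apply Rmult_le_compat_l; [apply Rabs_pos|]. simpl. assert (Cmod h * Cmod h <= 1) by nra. nra. }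
  assert (Cmod c2 * (Cmod h * Cmod h) <= Cmod c2 * Cmod h).
  { apply Rmult_le_compat_l. apply Cmod_ge_0. nra. }
  assert (L * Cmod h < eps).
  { apply Rmult_lt_compat_l with (r := L) in Hh3; auto.
    replace (L * (eps / L)) with eps in Hh3 by (field; lra). lra. }
  unfold L in *. pose proof (Cmod_ge_0 c1). pose proof (Cmod_ge_0 c2). nra.
Qed.

Lemma ccont_plus F G p : ccont F p -> ccont G p -> ccont (fun z => F z + G z) p.
Proof.
  intros HF HG eps Heps.
  destruct (HF (eps/2) ltac:(lra)) as [d1 [Hd1 H1]].
  destruct (HG (eps/2) ltac:(lra)) as [d2 [Hd2 H2]].
  exists (Rmin d1 d2). split. apply Rmin_pos; auto.
  intros z Hz1 Hz2.
  assert (Rabs (Re z - Re p) < d1) by (eapply Rlt_le_trans; [exact Hz1|apply Rmin_l]).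
  assert (Rabs (Re z - Re p) < d2) by (eapply Rlt_le_trans; [exact Hz1|apply Rmin_r]).
  assert (Rabs (Im z - Im p) < d1) by (eapply Rlt_le_trans; [exact Hz2|apply Rmin_l]).
  assert (Rabs (Im z - Im p) < d2) by (eapply Rlt_le_trans; [exact Hz2|apply Rmin_r]).
  specialize (H1 z ltac:(auto) ltac:(auto)). specialize (H2 z ltac:(auto) ltac:(auto)).
  replace (F z + G z - (F p + G p)) with ((F z - F p) + (G z - G p)) by ring.
  eapply Rle_lt_trans; [apply Rabs_triang|]. lra.
Qed.

Lemma ccont_sq (proj : C -> R) (x0 : R) p :
  (forall z, Rabs (proj z - proj p) <= Rabs (Re z - Re p) + Rabs (Im z - Im p)) ->
  ccont (fun z => (proj z - x0) ^ 2) p.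
Proof.
  intros Hpr eps Heps.
  set (X := proj p - x0).
  set (L := 2 * Rabs X + 2).
  assert (HL : 0 < L) by (unfold L; pose proof (Rabs_pos X); lra).
  exists (Rmin (1/2) (eps / (2 * L))). split. apply Rmin_pos; [lra| apply Rdiv_lt_0_compat; lra].
  intros z Hz1 Hz2.
  assert (Hu : Rabs (proj z - proj p) < 2 * Rmin (1/2) (eps / (2 * L))) by (specialize (Hpr z); lra).
  cbv beta. set (u := proj z - proj p) in *.
  replace ((proj z - x0) ^ 2 - X ^ 2) with (u * (2 * X + u)) by (unfold u, X; ring).
  rewrite Rabs_mult.
  assert (Hu1 : Rabs u < 1) by (eapply Rlt_le_trans; [exact Hu|]; pose proof (Rmin_l (1/2) (eps / (2 * L))); lra).
  assert (Hu2 : Rabs u < eps / L).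
  { eapply Rlt_le_trans; [exact Hu|]. pose proof (Rmin_r (1/2) (eps / (2 * L))).
    replace (eps / L) with (2 * (eps / (2 * L))) by (field; lra). lra. }
  assert (Rabs (2 * X + u) <= L).
  { eapply Rle_trans; [apply Rabs_triang|]. rewrite Rabs_mult, (Rabs_pos_eq 2) by lra. unfold L. lra. }
  apply Rle_lt_trans with (Rabs u * L). apply Rmult_le_compat_l; auto. apply Rabs_pos.
  apply Rmult_lt_compat_r with (r := L) in Hu2; auto.
  replace (eps / L * L) with eps in Hu2 by (field; lra). lra.
Qed.

Lemma ccont_w (w : C -> C) (c p : C) : (exists c0 c1 c2, LE2 w p c0 c1 c2) ->
  ccont (fun z => Re (c * w z)%C) p.
Proof.
  intros [c0 [c1 [c2 H]]] eps Heps.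
  destruct (LE2_cont _ _ _ _ _ H (eps / (Cmod c + 1))) as [d [Hd Hd']].
  { apply Rdiv_lt_0_compat; [lra|]. pose proof (Cmod_ge_0 c); lra. }
  exists (d / 2). split; [lra|]. intros z Hz1 Hz2.
  assert (Hzp : Cmod (z - p)%C < d).
  { eapply Rle_lt_trans; [apply Cmod_le_sum|]. change (Rabs (Re z - Re p) + Rabs (Im z - Im p) < d). lra. }
  specialize (Hd' (z - p)%C Hzp). replace (p + (z - p))%C with z in Hd' by ring.
  replace (Re (c * w z) - Re (c * w p)) with (Re (c * (w z - w p)))%C by (simpl; ring).
  eapply Rle_lt_trans; [apply re_le_Cmod|]. rewrite Cmod_mult.
  pose proof (Cmod_ge_0 c). pose proof (Cmod_ge_0 (w z - w p)%C).
  apply Rle_lt_trans with ((Cmod c + 1) * Cmod (w z - w p)%C). nra.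
  apply Rmult_lt_compat_l with (r := Cmod c + 1) in Hd'; [|lra].
  replace ((Cmod c + 1) * (eps / (Cmod c + 1))) with eps in Hd' by (field; lra). lra.
Qed.

Lemma ccont_scal k F p : ccont F p -> ccont (fun z => k * F z) p.
Proof.
  intros HF eps Heps.
  destruct (HF (eps / (Rabs k + 1))) as [d [Hd H]].
  { apply Rdiv_lt_0_compat; [lra|]. pose proof (Rabs_pos k); lra. }
  exists d. split; auto. intros z Hz1 Hz2. specialize (H z Hz1 Hz2).
  replace (k * F z - k * F p) with (k * (F z - F p)) by ring. rewrite Rabs_mult.
  pose proof (Rabs_pos k). pose proof (Rabs_pos (F z - F p)).
  apply Rle_lt_trans with ((Rabs k + 1) * Rabs (F z - F p)). nra.
  apply Rmult_lt_compat_l with (r := Rabs k + 1) in H; [|lra].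
  replace ((Rabs k + 1) * (eps / (Rabs k + 1))) with eps in H by (field; lra). lra.
Qed.

Lemma proj_re_bound z p : Rabs (Re z - Re p) <= Rabs (Re z - Re p) + Rabs (Im z - Im p).
Proof. pose proof (Rabs_pos (Im z - Im p)); lra. Qed.
Lemma proj_im_bound z p : Rabs (Im z - Im p) <= Rabs (Re z - Re p) + Rabs (Im z - Im p).
Proof. pose proof (Rabs_pos (Re z - Re p)); lra. Qed.

Lemma MP (w : C -> C) (a : C) (B : R) :
  (forall p, exists c0 c1 c2, LE2 w p c0 c1 c2) ->
  (forall z, inQ a z -> (Rabs (Re z - Re a) = 1 \/ Rabs (Im z - Im a) = 1) -> Cmod (w z) <= B) ->
  forall z, inQ a z -> Cmod (w z) <= B.
Proof.
  intros HLE Hbd z0 Hz0. apply Rnot_lt_le. intro Hgt.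
  assert (HB0 : 0 <= B).
  { set (z1 := (a + RtoC 1)%C).
    assert (Hz1 : inQ a z1). { split; apply Rabs_le; unfold z1, Re, Im; simpl; lra. }
    apply Rle_trans with (Cmod (w z1)); [apply Cmod_ge_0| apply Hbd; auto].
    left. unfold z1, Re; simpl. replace (fst a + 1 - fst a) with 1 by ring. apply Rabs_R1. }
  set (W := w z0). set (c := Cconj W). set (nW := Cmod W).
  assert (HnW : B < nW) by exact Hgt.
  set (gam := nW * (nW - B)).
  assert (Hgam : 0 < gam) by (unfold gam; apply Rmult_lt_0_compat; lra).
  set (d0 := gam / 4).
  set (v := fun z => Re (c * w z)%C + d0 * ((Re z - Re a) ^ 2 + (Im z - Im a) ^ 2)).
  assert (Hvc : forall p, inQ a p -> ccont v p).
  { intros p _. apply ccont_plus. apply ccont_w; auto.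
    apply ccont_scal. apply ccont_plus.
    - apply ccont_sq. intro z. apply proj_re_bound.
    - apply ccont_sq. intro z. apply proj_im_bound. }
  destruct (argmax_Q v a Hvc) as [p [Hp Hmax]].
  assert (Hvz0 : nW ^ 2 <= v z0).
  { unfold v. replace (Re (c * w z0)%C) with (nW ^ 2).
    assert (0 <= d0 * ((Re z0 - Re a) ^ 2 + (Im z0 - Im a) ^ 2)).
    { apply Rmult_le_pos. unfold d0; lra. apply Rplus_le_le_0_compat; apply pow2_ge_0. }
    lra.
    unfold c, nW. fold W. rewrite Cmult_comm, <- Cmod2_conj. reflexivity. }
  specialize (Hmax z0 Hz0) as Hpz0.
  assert (Hre : forall z, Cmod (w z) <= B -> Re (c * w z)%C <= nW * B).
  { intros z Hz. eapply Rle_trans; [apply Rle_abs|]. eapply Rle_trans; [apply re_le_Cmod|].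
    rewrite Cmod_mult. unfold c. rewrite Cmod_conj. fold nW.
    apply Rmult_le_compat_l; auto. unfold nW; apply Cmod_ge_0. }
  destruct Hp as [Hp1 Hp2].
  assert (Hint : Rabs (Re p - Re a) < 1 /\ Rabs (Im p - Im a) < 1).
  { destruct (Req_dec (Rabs (Re p - Re a)) 1) as [E|E];
    [|destruct (Req_dec (Rabs (Im p - Im a)) 1) as [E'|E']].
    3: split; lra.
    all: exfalso; assert (Hwp : Cmod (w p) <= B) by (apply Hbd; [split; auto| auto]);
      specialize (Hre p Hwp);
      assert ((Re p - Re a) ^ 2 <= 1) by (rewrite <- (pow2_abs (Re p - Re a)); pose proof (Rabs_pos (Re p - Re a)); nra);
      assert ((Im p - Im a) ^ 2 <= 1) by (rewrite <- (pow2_abs (Im p - Im a)); pose proof (Rabs_pos (Im p - Im a)); nra);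
      assert (v p <= nW * B + d0 * 2) by (unfold v; unfold d0; nra);
      unfold d0, gam in *; nra. }
  destruct Hint as [Hi1 Hi2].
  destruct (HLE p) as [c0 [c1 [c2 HL]]].
  pose proof (LE2_c0 _ _ _ _ _ HL) as Hc0.
  destruct HL as [K [tau [Htau HK]]].
  set (m := Rmin (1 - Rabs (Re p - Re a)) (1 - Rabs (Im p - Im a))).
  assert (Hm : 0 < m) by (apply Rmin_pos; lra).
  set (t := Rmin (Rmin (tau / 2) (m / 2)) (d0 / (2 * (nW * Rabs K + 1)))).
  assert (HnW0 : 0 <= nW) by (unfold nW; apply Cmod_ge_0).
  assert (HK0 : 0 <= nW * Rabs K) by (apply Rmult_le_pos; auto; apply Rabs_pos).
  assert (Hd0 : 0 < d0) by (unfold d0; lra).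
  assert (Ht : 0 < t).
  { unfold t. repeat apply Rmin_pos; try lra. apply Rdiv_lt_0_compat; lra. }
  assert (Ht1 : t < tau) by (unfold t; pose proof (Rmin_l (Rmin (tau / 2) (m / 2)) (d0 / (2 * (nW * Rabs K + 1)))); pose proof (Rmin_l (tau / 2) (m / 2)); lra).
  assert (Ht2 : t < m) by (unfold t; pose proof (Rmin_l (Rmin (tau / 2) (m / 2)) (d0 / (2 * (nW * Rabs K + 1)))); pose proof (Rmin_r (tau / 2) (m / 2)); lra).
  assert (Ht3 : t * (nW * Rabs K + 1) < d0).
  { assert (t <= d0 / (2 * (nW * Rabs K + 1))) by apply Rmin_r.
    apply Rmult_le_compat_r with (r := nW * Rabs K + 1) in H; [|lra].
    replace (d0 / (2 * (nW * Rabs K + 1)) * (nW * Rabs K + 1)) with (d0 / 2) in H by (field; lra). lra. }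
  assert (Hm1 : m <= 1 - Rabs (Re p - Re a)) by apply Rmin_l.
  assert (Hm2 : m <= 1 - Rabs (Im p - Im a)) by apply Rmin_r.
  set (h1 := (t, 0) : C). set (h2 := (- t, 0) : C). set (h3 := (0, t) : C). set (h4 := (0, - t) : C).
  assert (Hmod : forall hh, hh = h1 \/ hh = h2 \/ hh = h3 \/ hh = h4 -> Cmod hh = t).
  { intros hh Hh. unfold Cmod.
    destruct Hh as [ -> | [ -> | [ -> | -> ]]]; unfold h1, h2, h3, h4; simpl;
      match goal with |- sqrt ?e = t => replace e with (t * t) by ring end;
      apply sqrt_square; lra. }
  assert (HinQ : forall hh, hh = h1 \/ hh = h2 \/ hh = h3 \/ hh = h4 -> inQ a (p + hh)%C).
  { apply Rabs_le_inv in Hp1. apply Rabs_le_inv in Hp2.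
    intros hh Hh; split; destruct Hh as [ -> | [ -> | [ -> | -> ]]]; unfold h1, h2, h3, h4; simpl; apply Rabs_le;
    pose proof (Rabs_le_inv _ _ (Rlt_le _ _ Hi1)); pose proof (Rabs_le_inv _ _ (Rlt_le _ _ Hi2));
    unfold Rabs in Hm1, Hm2; destruct (Rcase_abs (Re p - Re a)); destruct (Rcase_abs (Im p - Im a));
    unfold Re, Im in *; lra. }
  assert (HE : forall hh, hh = h1 \/ hh = h2 \/ hh = h3 \/ hh = h4 ->
     Cmod (w (p + hh)%C - (c0 + c1 * hh + c2 * (hh * hh)))%C <= Rabs K * t ^ 3).
  { intros hh Hh. rewrite <- (Hmod hh Hh). eapply Rle_trans. apply HK. rewrite (Hmod hh Hh). auto.
    apply Rmult_le_compat_r. apply pow_le. apply Cmod_ge_0. apply Rle_abs. }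
  set (E1 := (w (p + h1)%C - (c0 + c1 * h1 + c2 * (h1 * h1)))%C).
  set (E2 := (w (p + h2)%C - (c0 + c1 * h2 + c2 * (h2 * h2)))%C).
  set (E3 := (w (p + h3)%C - (c0 + c1 * h3 + c2 * (h3 * h3)))%C).
  set (E4 := (w (p + h4)%C - (c0 + c1 * h4 + c2 * (h4 * h4)))%C).
  assert (HE1 := HE h1 ltac:(auto)). assert (HE2 := HE h2 ltac:(auto)).
  assert (HE3 := HE h3 ltac:(auto)). assert (HE4 := HE h4 ltac:(auto)).
  fold E1 in HE1. fold E2 in HE2. fold E3 in HE3. fold E4 in HE4.
  assert (Hv1 := Hmax _ (HinQ h1 ltac:(auto))).
  assert (Hv2 := Hmax _ (HinQ h2 ltac:(auto))).
  assert (Hv3 := Hmax _ (HinQ h3 ltac:(auto))).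
  assert (Hv4 := Hmax _ (HinQ h4 ltac:(auto))).
  assert (Hsum : (w (p + h1)%C + w (p + h2)%C + w (p + h3)%C + w (p + h4)%C - 4 * w p = E1 + E2 + E3 + E4)%C).
  { unfold E1, E2, E3, E4. rewrite <- Hc0. unfold h1, h2, h3, h4. ceq. }
  assert (HReS : Re (c * (E1 + E2 + E3 + E4))%C >= - (nW * (4 * (Rabs K * t ^ 3)))).
  { pose proof (re_le_Cmod (c * (E1 + E2 + E3 + E4))%C) as Hr. apply Rabs_le_inv in Hr.
    rewrite Cmod_mult in Hr. unfold c in Hr. rewrite Cmod_conj in Hr. fold nW in Hr.
    pose proof (Cmod_triangle (E1 + E2 + E3)%C E4).
    pose proof (Cmod_triangle (E1 + E2)%C E3).
    pose proof (Cmod_triangle E1 E2).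
    assert (Cmod (E1 + E2 + E3 + E4)%C <= 4 * (Rabs K * t ^ 3)) by lra.
    assert (nW * Cmod (E1 + E2 + E3 + E4)%C <= nW * (4 * (Rabs K * t ^ 3))) by (apply Rmult_le_compat_l; auto).
    unfold c. lra. }
  assert (HRe : Re (c * w (p + h1)%C)%C + Re (c * w (p + h2)%C)%C + Re (c * w (p + h3)%C)%C + Re (c * w (p + h4)%C)%C
                - 4 * Re (c * w p)%C = Re (c * (E1 + E2 + E3 + E4))%C).
  { rewrite <- Hsum. simpl. ring. }
  assert (Hcomb : v (p + h1)%C + v (p + h2)%C + v (p + h3)%C + v (p + h4)%C - 4 * v p
                  = Re (c * (E1 + E2 + E3 + E4))%C + d0 * (4 * t ^ 2)).
  { rewrite <- HRe. unfold v, h1, h2, h3, h4, c, Re, Im. simpl. ring. }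
  assert (Hsq : d0 * (4 * t ^ 2) <= nW * (4 * (Rabs K * t ^ 3))) by lra.
  assert (t ^ 2 * (d0 - t * (nW * Rabs K)) <= 0) by nra.
  assert (0 < t ^ 2) by (apply pow_lt; lra).
  nra.
Qed.


Lemma schwarz f D a mu B : cderivs f D -> (1 <= mu)%nat ->
  (forall j, (j < mu)%nat -> D j a = RtoC 0) ->
  (forall z, inQ a z -> (Rabs (Re z - Re a) = 1 \/ Rabs (Im z - Im a) = 1) -> Cmod (f z) <= B) ->
  forall b, inQ a b -> Cmod (f b) <= B * Cmod (b - a)%C ^ mu.
Proof.
  intros HD Hmu Hz Hbd b Hb.
  assert (HB0 : 0 <= B).
  { set (z1 := (a + RtoC 1)%C).
    apply Rle_trans with (Cmod (f z1)); [apply Cmod_ge_0| apply Hbd].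
    split; apply Rabs_le; unfold z1, Re, Im; simpl; lra.
    left. unfold z1, Re; simpl. replace (fst a + 1 - fst a) with 1 by ring. apply Rabs_R1. }
  set (w := wq f D a mu).
  assert (HLE : forall p, exists c0 c1 c2, LE2 w p c0 c1 c2).
  { intro p. destruct (myCeq_dec p a) as [->|Hpa].
    - apply LE_w_at; auto.
    - apply LE_w_away; auto. }
  assert (Hw : forall z, z <> a -> f z = (w z * Cpow (z - a) mu)%C).
  { intros z Hza. unfold w, wq. destruct (myCeq_dec z a) as [E|E]; [contradiction|].
    assert (HP : Cpow (z - a) mu <> RtoC 0) by (apply Cpow_neq0; intro E0; apply Hza; apply Csub_eq0; auto). set (P := Cpow (z - a) mu) in *. field. auto. }
  assert (Hbw : forall z, inQ a z -> (Rabs (Re z - Re a) = 1 \/ Rabs (Im z - Im a) = 1) -> Cmod (w z) <= B).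
  { intros z HzQ Hzb.
    assert (Hza1 : 1 <= Cmod (z - a)%C).
    { destruct Hzb as [E|E].
      - rewrite <- E. replace (Re z - Re a) with (Re (z - a)%C) by (unfold Re; simpl; ring). apply re_le_Cmod.
      - rewrite <- E. replace (Im z - Im a) with (snd (z - a)%C) by (unfold Im; simpl; ring). pose proof (Rmax_Cmod (z - a)%C) as Hm.
        eapply Rle_trans; [|exact Hm]. apply Rmax_r. }
    assert (Hza : z <> a). { intro E. subst. replace (a - a)%C with (RtoC 0) in Hza1 by ring. rewrite Cmod_0 in Hza1. lra. }
    specialize (Hbd z HzQ Hzb). rewrite (Hw z Hza), Cmod_mult, Cmod_pow in Hbd.
    assert (1 <= Cmod (z - a)%C ^ mu) by (apply pow_R1_Rle; auto).
    pose proof (Cmod_ge_0 (w z)). nra. }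
  pose proof (MP w a B HLE Hbw b Hb) as Hwb.
  destruct (myCeq_dec b a) as [->|Hba].
  - destruct HD as [HD0 _]. rewrite <- HD0. rewrite Hz by lia. rewrite Cmod_0.
    apply Rmult_le_pos; auto. apply pow_le, Cmod_ge_0.
  - rewrite (Hw b Hba), Cmod_mult, Cmod_pow.
    apply Rmult_le_compat_r. apply pow_le, Cmod_ge_0. auto.
Qed.


Lemma finite_pos_min (g : nat -> R) (P : nat -> Prop) N :
  (forall k, (k < N)%nat -> P k -> 0 < g k) ->
  exists r, 0 < r /\ forall k, (k < N)%nat -> P k -> r <= g k.
Proof.
  induction N; intro H.
  - exists 1. split; [lra|]. intros; lia.
  - destruct IHN as [r [Hr Hr']]. { intros; apply H; auto; lia. }
    destruct (classic (P N)) as [HP|HP].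
    + assert (0 < g N) by (apply H; auto).
      exists (Rmin r (g N)). split. apply Rmin_pos; auto.
      intros k Hk HPk. destruct (Nat.eq_dec k N) as [->|Hne]. apply Rmin_r.
      eapply Rle_trans; [apply Rmin_l| apply Hr'; auto; lia].
    + exists r. split; auto. intros k Hk HPk. destruct (Nat.eq_dec k N) as [->|Hne]. contradiction.
      apply Hr'; auto; lia.
Qed.

Lemma Cmod_rev_tri (x y : C) : Cmod x - Cmod y <= Cmod (x - y)%C.
Proof.
  pose proof (Cmod_triangle (x - y)%C y). replace (x - y + y)%C with x in H by ring. lra.
Qed.

Lemma sep_point (lam : nat -> C) (mu : nat -> nat) : multiplicity_sequence lam mu ->
  forall n, exists r, 0 < r /\ forall k, k <> n -> r <= Cmod (lam n - lam k)%C.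
Proof.
  intros [Hdist [Hnz [Hunb [Hmon Hmu]]]] n.
  destruct (Hunb (Cmod (lam n) + 1)) as [N' HN'].
  destruct (finite_pos_min (fun k => Cmod (lam n - lam k)%C) (fun k => k <> n) N') as [r [Hr Hr']].
  { intros k _ Hk. apply Cmod_gt_0. intro E. apply (Hdist n k); auto. apply Csub_eq0; auto. }
  exists (Rmin r 1). split. apply Rmin_pos; lra.
  intros k Hk. destruct (Compare_dec.lt_dec k N') as [Hlt|Hge].
  - eapply Rle_trans; [apply Rmin_l| apply Hr'; auto].
  - eapply Rle_trans; [apply Rmin_r|]. specialize (HN' k ltac:(lia)).
    pose proof (Cmod_rev_tri (lam k) (lam n)).
    replace (lam n - lam k)%C with (- (lam k - lam n))%C by ring. rewrite Cmod_opp. lra.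
Qed.

Lemma sep_finite (lam : nat -> C) (mu : nat -> nat) : multiplicity_sequence lam mu ->
  forall N, exists m0, 0 < m0 /\ forall n k, (n < N)%nat -> k <> n -> m0 <= Cmod (lam n - lam k)%C.
Proof.
  intros HM N. induction N.
  - exists 1. split; [lra|]. intros; lia.
  - destruct IHN as [m0 [Hm0 H]]. destruct (sep_point lam mu HM N) as [r [Hr Hr']].
    exists (Rmin m0 r). split. apply Rmin_pos; auto.
    intros n k Hn Hk. destruct (Nat.eq_dec n N) as [->|Hne].
    + eapply Rle_trans; [apply Rmin_r| auto].
    + eapply Rle_trans; [apply Rmin_l| apply H; auto; lia].
Qed.

Lemma exp_le_1 x : x <= 0 -> exp x <= 1.
Proof. intro H. rewrite <- exp_0. destruct (Req_dec x 0) as [->|Hne]. lra. left. apply exp_increasing. lra. Qed.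

Lemma exp_pow_INR y n : exp y ^ n = exp (INR n * y).
Proof.
  induction n. simpl. rewrite Rmult_0_l, exp_0. reflexivity.
  rewrite S_INR. simpl. rewrite IHn, <- exp_plus. f_equal. ring.
Qed.

Lemma sum_first (g : nat -> R) N : (forall i, (1 <= i)%nat -> g i = 0) -> sum_f_R0 g N = g 0%nat.
Proof. intro H. induction N. reflexivity. simpl. rewrite IHN, (H (S N)) by lia. ring. Qed.

Theorem lemma2p1 (lam : nat -> C) (mu : nat -> nat) :
  multiplicity_sequence lam mu ->
  interpolating_variety lam mu ->
  forall eps : R, 0 < eps ->
    exists m : R, 0 < m /\
      forall n k : nat, k <> n ->
        m * exp (- (eps * Cmod (lam n)) / INR (mu n)) <= Cmod (Cminus (lam n) (lam k)).
Proof.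
  intros HM HI eps Heps.
  apply NNPP. intro Hneg.
  assert (Hbad : forall m, 0 < m -> exists n k, k <> n /\
      Cmod (lam n - lam k)%C < m * exp (- (eps * Cmod (lam n)) / INR (mu n))).
  { intros m Hm. apply NNPP. intro Hno. apply Hneg. exists m. split; auto.
    intros n k Hkn. apply Rnot_lt_le. intro Hlt. apply Hno. exists n, k. auto. }
  pose proof HM as HM'. destruct HM' as [Hdist [Hnz [Hunb [Hmon Hmu]]]].
  set (ex := fun n => exp (- (eps * Cmod (lam n)) / INR (mu n))).
  assert (Hex1 : forall n, ex n <= 1).
  { intro n. apply exp_le_1. unfold Rdiv.
    assert (0 < / INR (mu n)) by (apply Rinv_0_lt_compat, lt_0_INR; specialize (Hmu n); lia).
    pose proof (Cmod_ge_0 (lam n)). assert (0 <= eps * Cmod (lam n)) by nra. nra. }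
  assert (Hex0 : forall n, 0 < ex n) by (intro; apply exp_pos).
  assert (Hpick : forall (T : R) (j : nat), exists p : nat * nat,
     snd p <> fst p /\ T < Cmod (lam (fst p)) /\
     Cmod (lam (fst p) - lam (snd p))%C < / INR (S j) * ex (fst p)).
  { intros T j. destruct (Hunb T) as [N HN].
    destruct (sep_finite lam mu HM N) as [m0 [Hm0 Hsep]].
    assert (HSj : 0 < / INR (S j)) by (apply Rinv_0_lt_compat, lt_0_INR; lia).
    destruct (Hbad (Rmin m0 (/ INR (S j)))) as [n [k [Hkn Hlt]]].
    { apply Rmin_pos; auto. }
    exists (n, k). simpl. split; auto.
    destruct (Compare_dec.lt_dec n N) as [HnN|HnN].
    - exfalso. specialize (Hsep n k HnN Hkn). change (exp (- (eps * Cmod (lam n)) / INR (mu n))) with (ex n) in Hlt.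
      assert (Rmin m0 (/ INR (S j)) * ex n <= m0).
      { pose proof (Rmin_l m0 (/ INR (S j))). pose proof (Hex1 n). pose proof (Hex0 n).
        assert (0 < Rmin m0 (/ INR (S j))) by (apply Rmin_pos; auto). nra. }
      lra.
    - split. apply HN. lia. change (exp (- (eps * Cmod (lam n)) / INR (mu n))) with (ex n) in Hlt.
      eapply Rlt_le_trans; [exact Hlt|]. apply Rmult_le_compat_r. left; auto. apply Rmin_r. }
  set (pick := fun T j => proj1_sig (constructive_indefinite_description _ (Hpick T j))).
  assert (Hpk : forall T j, snd (pick T j) <> fst (pick T j) /\ T < Cmod (lam (fst (pick T j))) /\
     Cmod (lam (fst (pick T j)) - lam (snd (pick T j)))%C < / INR (S j) * ex (fst (pick T j))).
  { intros T j. unfold pick. destruct (constructive_indefinite_description _ (Hpick T j)) as [p Hp]. exact Hp. }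
  set (sq := fix sq (j : nat) : nat * nat := match j with
        | O => pick 0 O
        | S i => pick (Cmod (lam (fst (sq i))) + 3) (S i) end).
  set (nn := fun j => fst (sq j)). set (kk := fun j => snd (sq j)).
  assert (Hsq : forall j, kk j <> nn j /\ Cmod (lam (nn j) - lam (kk j))%C < / INR (S j) * ex (nn j)).
  { intro j. destruct j as [|i]. - destruct (Hpk 0 0%nat) as [A [_ C0]]. split; [exact A| exact C0]. - destruct (Hpk (Cmod (lam (fst (sq i))) + 3) (S i)) as [A [_ C0]]. split; [exact A| exact C0]. }
  assert (Hgrow : forall j, Cmod (lam (nn j)) + 3 < Cmod (lam (nn (S j)))).
  { intro j. unfold nn. simpl. destruct (Hpk (Cmod (lam (fst (sq j))) + 3) (S j)) as [_ [B0 _]]. exact B0. }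
  assert (Hmono : forall i j, (i < j)%nat -> Cmod (lam (nn i)) + 3 < Cmod (lam (nn j))).
  { intros i j Hij. induction Hij. apply Hgrow.
    specialize (Hgrow m). lra. }
  assert (Hclose : forall j, Cmod (lam (nn j) - lam (kk j))%C < 1).
  { intro j. destruct (Hsq j) as [_ H]. eapply Rlt_le_trans; [exact H|].
    assert (/ INR (S j) <= 1).
    { rewrite <- Rinv_1. apply Rinv_le_contravar. lra. rewrite S_INR. pose proof (pos_INR j). lra. }
    pose proof (Hex1 (nn j)). pose proof (Hex0 (nn j)).
    assert (0 < / INR (S j)) by (apply Rinv_0_lt_compat, lt_0_INR; lia). nra. }
  assert (Hdisj : forall i j, nn i <> kk j).
  { intros i j E. destruct (Nat.eq_dec i j) as [->|Hij].
    - destruct (Hsq j) as [H _]. auto.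
    - pose proof (Hclose j) as Hc. rewrite <- E in Hc.
      pose proof (Cmod_rev_tri (lam (nn j)) (lam (nn i))).
      pose proof (Cmod_rev_tri (lam (nn i)) (lam (nn j))).
      replace (lam (nn i) - lam (nn j))%C with (- (lam (nn j) - lam (nn i)))%C in H0 by ring.
      rewrite Cmod_opp in H0.
      destruct (Compare_dec.lt_dec i j) as [Hlt|Hlt].
      + specialize (Hmono i j Hlt). lra.
      + specialize (Hmono j i ltac:(lia)). lra. }
  set (adata := fun (n i : nat) =>
     if excluded_middle_informative (exists j, kk j = n) then
       (match i with O => RtoC 1 | S _ => RtoC 0 end) else RtoC 0).
  assert (Hadm : admissible_data lam mu adata).
  { intros e He. exists 1. intro n.
    rewrite (sum_first (fun i => Cmod (adata n i))).
    2: { intros i Hi. unfold adata. destruct (excluded_middle_informative _); destruct i; try lia; apply Cmod_0. }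
    assert (Cmod (adata n 0%nat) <= 1).
    { unfold adata. destruct (excluded_middle_informative _). rewrite Cmod_1; lra. rewrite Cmod_0; lra. }
    assert (exp (- e * Cmod (lam n)) <= 1).
    { apply exp_le_1. pose proof (Cmod_ge_0 (lam n)). nra. }
    pose proof (Cmod_ge_0 (adata n 0%nat)). pose proof (exp_pos (- e * Cmod (lam n))). nra. }
  destruct (HI adata Hadm) as [f [[Hent Hgr] [D [HD Hint]]]].
  destruct (Hgr eps Heps) as [M HMf].
  assert (HM0 : 0 <= M).
  { specialize (HMf (RtoC 0)). rewrite Cmod_0, Rmult_0_r, exp_0 in HMf. pose proof (Cmod_ge_0 (f (RtoC 0))). lra. }
  set (X := M * exp (2 * eps)).
  destruct (archimed_cor1 (/ (X + 1))) as [J [HJ HJ0]].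
  { apply Rinv_0_lt_compat. assert (0 <= X) by (unfold X; apply Rmult_le_pos; auto; left; apply exp_pos). lra. }
  assert (HX0 : 0 <= X) by (unfold X; apply Rmult_le_pos; auto; left; apply exp_pos).
  assert (HJX : X + 1 < INR J).
  { assert (0 < INR J) by (apply lt_0_INR; auto).
    replace (X + 1) with (/ / (X + 1)) by (field; lra).
    replace (INR J) with (/ / INR J) by (field; lra).
    apply Rinv_lt_contravar; auto. apply Rmult_lt_0_compat; apply Rinv_0_lt_compat; lra. }
  set (a := lam (nn J)). set (b := lam (kk J)). set (m := mu (nn J)).
  assert (Hfb : f b = RtoC 1).
  { assert (H0 := Hint (kk J) 0%nat ltac:(specialize (Hmu (kk J)); lia)).
    unfold adata in H0. destruct (excluded_middle_informative (exists j, kk j = kk J)) as [_|Hn].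
    2: { exfalso; apply Hn; exists J; auto. }
    destruct HD as [HD0 _]. rewrite HD0 in H0. simpl (fact 0) in H0.
    unfold b. replace (f (lam (kk J))) with (f (lam (kk J)) / RtoC (INR 1))%C. exact H0.
    simpl. field. }
  assert (Hza : forall i, (i < m)%nat -> D i a = RtoC 0).
  { intros i Hi. assert (H0 := Hint (nn J) i Hi). unfold adata in H0.
    destruct (excluded_middle_informative (exists j, kk j = nn J)) as [[j Hj]|_].
    { exfalso. apply (Hdisj J j). auto. }
    unfold a. replace (D i (lam (nn J))) with (D i (lam (nn J)) / RtoC (INR (fact i)) * RtoC (INR (fact i)))%C.
    rewrite H0. ring. field. apply fact_neq0. }
  set (Bd := M * exp (eps * (Cmod a + 2))).
  assert (Hbd : forall z, inQ a z -> (Rabs (Re z - Re a) = 1 \/ Rabs (Im z - Im a) = 1) -> Cmod (f z) <= Bd).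
  { intros z [Hz1 Hz2] _. eapply Rle_trans; [apply HMf|]. unfold Bd.
    apply Rmult_le_compat_l; auto.
    destruct (Req_dec (eps * Cmod z) (eps * (Cmod a + 2))) as [E|E]. rewrite E; lra.
    left. apply exp_increasing.
    assert (Cmod z <= Cmod a + 2).
    { pose proof (Cmod_triangle a (z - a)%C). replace (a + (z - a))%C with z in H by ring.
      pose proof (Cmod_le_sum (z - a)%C).
      replace (Re (z - a)%C) with (Re z - Re a) in H0 by (unfold Re; simpl; ring).
      replace (Im (z - a)%C) with (Im z - Im a) in H0 by (unfold Im; simpl; ring). lra. }
    apply Rmult_le_compat_l with (r := eps) in H; lra. }
  assert (HbQ : inQ a b).
  { pose proof (Hclose J) as Hc. fold a b in Hc.
    replace (a - b)%C with (- (b - a))%C in Hc by ring. rewrite Cmod_opp in Hc.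
    split.
    - replace (Re b - Re a) with (Re (b - a)%C) by (unfold Re; simpl; ring).
      pose proof (re_le_Cmod (b - a)%C). lra.
    - replace (Im b - Im a) with (snd (b - a)%C) by (unfold Im; simpl; ring).
      pose proof (Rmax_Cmod (b - a)%C). pose proof (Rmax_r (Rabs (fst (b - a)%C)) (Rabs (snd (b - a)%C))). lra. }
  assert (Hm1 : (1 <= m)%nat) by apply Hmu.
  pose proof (schwarz f D a m Bd HD Hm1 Hza Hbd b HbQ) as Hsch.
  rewrite Hfb, Cmod_1 in Hsch.
  destruct (Hsq J) as [_ HJd]. fold a b in HJd.
  replace (a - b)%C with (- (b - a))%C in HJd by ring. rewrite Cmod_opp in HJd.
  unfold ex in HJd. fold m in HJd.
  set (q := / INR (S J)).
  assert (Hq0 : 0 < q) by (apply Rinv_0_lt_compat, lt_0_INR; lia).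
  assert (Hq1 : q < / (X + 1)).
  { unfold q. apply Rinv_lt_contravar. apply Rmult_lt_0_compat; [lra| apply lt_0_INR; lia].
    rewrite S_INR. lra. }
  assert (Hpow : Cmod (b - a)%C ^ m <= q ^ m * exp (- (eps * Cmod a))).
  { replace (exp (- (eps * Cmod a))) with (exp (- (eps * Cmod a) / INR m) ^ m).
    rewrite <- Rpow_mult_distr. apply pow_incr. split. apply Cmod_ge_0. left; exact HJd.
    rewrite exp_pow_INR. f_equal. field. apply Rgt_not_eq, lt_0_INR; lia. }
  assert (HBd0 : 0 <= Bd) by (unfold Bd; apply Rmult_le_pos; auto; left; apply exp_pos).
  assert (Hfin : Bd * (q ^ m * exp (- (eps * Cmod a))) = X * q ^ m).
  { unfold Bd, X. replace (eps * (Cmod a + 2)) with (2 * eps + eps * Cmod a) by ring.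
    rewrite exp_plus. replace (M * (exp (2 * eps) * exp (eps * Cmod a)) * (q ^ m * exp (- (eps * Cmod a))))
      with (M * exp (2 * eps) * q ^ m * (exp (eps * Cmod a) * exp (- (eps * Cmod a)))) by ring.
    rewrite <- exp_plus. replace (eps * Cmod a + - (eps * Cmod a)) with 0 by ring. rewrite exp_0. ring. }
  assert (Hqm : q ^ m <= q).
  { assert (Hq1' : q <= 1) by (assert (/ (X + 1) <= 1) by (rewrite <- Rinv_1; apply Rinv_le_contravar; lra); lra).
    assert (Hle : forall n, q ^ n <= 1) by (induction n; simpl; [lra| pose proof (pow_le q n ltac:(lra)); nra]).
    destruct m as [|m']. lia. simpl. specialize (Hle m'). pose proof (pow_le q m' ltac:(lra)). nra. }
  assert (H1 : 1 <= X * q) by nra.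
  assert (H2 : X * q < X * / (X + 1) + q) by nra.
  assert (H3 : X * / (X + 1) + / (X + 1) = 1) by (field; lra).
  nra.
Qed.
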